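(* Let $(X,d,f)$ be a dynamical system and let $\mathcal{A}=\{\mathcal{U}_n\}_{n\in\mathbb{N}}$ be a complete tame defining sequence of $(X,d)$. Assume that $f$ has the finite shadowing property. Then: (i) $f$ is conjugate to the inverse limit of a sequence of 1-step shifts on a countable alphabet; more precisely, $(X,d,f)$ is topologically conjugate to $\big(\varprojlim(\hookrightarrow,\mathcal{PO}(\mathcal{U}_n)),\sigma^*\big)$; (ii) if moreover $f$ is uniformly continuous, then this conjugacy can be chosen uniform, i.e. the conjugating homeomorphism and its inverse are uniformly continuous.
   Context: All spaces are nonempty separable metrizable spaces. A dynamical system $(X,d,f)$ is a space $X$ with an admissible metric $d$ and a continuous map $f:X\to X$. A partition of $X$ is a cover by pairwise disjoint nonempty clopen sets; for a partition $\mathcal{U}$ and $x\in X$, $\mathcal{U}[x]$ is the element of $\mathcal{U}$ containing $x$. A defining sequence of $X$ is a sequence $\{\mathcal{U}_n\}_{n\in\mathbb{N}}$ of partitions such that each element of $\mathcal{U}_{n+1}$ is contained in an element of $\mathcal{U}_n$, and $\bigcup_n\mathcal{U}_n$ is a basis of the topology. It is complete if whenever $U_n\in\mathcal{U}_n$ with $U_{n+1}\subseteq U_n$ for all $n$, $\bigcap_nU_n\neq\emptyset$. It is tame (with respect to $d$) if $S_n:=\sup\{\operatorname{diam}(O):O\in\mathcal{U}_n\}\to0$ and for each $n$ there is $\rho_n>0$ with $d(x_1,x_2)\ge\rho_n$ whenever $x_1,x_2$ lie in distinct elements of $\mathcal{U}_n$. A $\delta$-pseudo-orbit is a (finite or infinite)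 sequence $(x_n)$ with $d(f(x_n),x_{n+1})<\delta$ for all consecutive indices; $x$ $\varepsilon$-shadows $(x_n)$ if $d(f^n(x),x_n)<\varepsilon$ for all indices $n$. $f$ has the finite shadowing property if for every $\varepsilon>0$ there is $\delta>0$ such that every finite $\delta$-pseudo-orbit is $\varepsilon$-shadowed by some point; the shadowing property is the same with infinite pseudo-orbits. For a partition $\mathcal{U}$ (with the discrete metric), $\mathcal{PO}(\mathcal{U})=\{(O_i)_{i\in\mathbb{N}}\in\mathcal{U}^{\mathbb{N}}: f(O_i)\cap O_{i+1}\neq\emptyset\ \forall i\}$, a 1-step shift space (shift space over the countable alphabet $\mathcal{U}$ defined by forbidden words of length 2) with shift map $\sigma(O_i)_i=(O_{i+1})_i$ and metric $d((O_i),(O'_i))=1/(i+1)$ for the least $i$ with $O_i\ne O'_i$. The bonding map $\hookrightarrow:\mathcal{PO}(\mathcal{U}_{n+1})\to\mathcal{PO}(\mathcal{U}_n)$ sends $(O_i)$ to the unique $(V_i)\in\mathcal{U}_n^{\mathbb{N}}$ with $O_i\subseteq V_i$ for all $i$. The inverse limit $\varprojlim(\hookrightarrow,\mathcal{PO}(\mathcal{U}_n))=\{(y_n)\in\prod_n\mathcal{PO}(\mathcal{U}_n): y_n=\hookrightarrow(y_{n+1})\ \forall n\}$, with metric $d_\Pi((y_n),(z_n))=\max_n d(y_n,z_n)/(n+1)$, and $\sigma^*$ is the restriction to it of the product of the shift maps. *)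

(* Defs.v *)
From Stdlib Require Import Reals Lra Lia Classical ClassicalEpsilon.
Open Scope R_scope.

Section Defs.
Context {X : Type}.

Definition subset (A B : X -> Prop) : Prop := forall x, A x -> B x.

Definition is_metric (d : X -> X -> R) : Prop :=
  (forall x y, 0 <= d x y) /\ (forall x y, d x y = 0 <-> x = y) /\
  (forall x y, d x y = d y x) /\ (forall x y z, d x z <= d x y + d y z).

Definition is_open (d : X -> X -> R) (A : X -> Prop) : Prop :=
  forall x, A x -> exists e, 0 < e /\ forall y, d x y < e -> A y.
Definition is_closed (d : X -> X -> R) (A : X -> Prop) : Prop :=
  is_open d (fun x => ~ A x).
Definition is_clopen d A := is_open d A /\ is_closed d A.

(* separable: there is a countable dense subset (X is nonempty) *)
Definition separable (d : X -> X -> R) : Prop :=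
  exists s : nat -> X, forall x e, 0 < e -> exists n, d x (s n) < e.

Definition continuous_map (d : X -> X -> R) (f : X -> X) : Prop :=
  forall x e, 0 < e -> exists dl, 0 < dl /\ forall y, d x y < dl -> d (f x) (f y) < e.
Definition unif_continuous_map (d : X -> X -> R) (f : X -> X) : Prop :=
  forall e, 0 < e -> exists dl, 0 < dl /\ forall x y, d x y < dl -> d (f x) (f y) < e.

Definition dyn_system (d : X -> X -> R) (f : X -> X) : Prop :=
  inhabited X /\ is_metric d /\ separable d /\ continuous_map d f.

Definition partition (d : X -> X -> R) (U : (X -> Prop) -> Prop) : Prop :=
  (forall A, U A -> (exists x, A x) /\ is_clopen d A) /\
  (forall A B, U A -> U B -> A <> B -> forall x, A x -> B x -> False) /\
  (forall x, exists A, U A /\ A x).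

Definition is_basis (d : X -> X -> R) (B : (X -> Prop) -> Prop) : Prop :=
  (forall A, B A -> is_open d A) /\
  (forall V, is_open d V -> forall x, V x -> exists A, B A /\ A x /\ subset A V).

Definition defining_sequence d (U : nat -> (X -> Prop) -> Prop) : Prop :=
  (forall n, partition d (U n)) /\
  (forall n A, U (S n) A -> exists B, U n B /\ subset A B) /\
  is_basis d (fun A => exists n, U n A).

Definition complete_seq (U : nat -> (X -> Prop) -> Prop) : Prop :=
  forall V : nat -> (X -> Prop), (forall n, U n (V n)) ->
    (forall n, subset (V (S n)) (V n)) -> exists x, forall n, V n x.

(* tame: S_n := sup of diameters of elements of U_n tends to 0, and
   distinct elements of U_n are at distance >= rho_n > 0 *)
Definition tame_seq d (U : nat -> (X -> Prop) -> Prop) : Prop :=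
  (forall e, 0 < e -> exists N, forall n, (N <= n)%nat ->
     forall O, U n O -> forall x y, O x -> O y -> d x y <= e) /\
  (forall n, exists rho, 0 < rho /\ forall A B x1 x2, U n A -> U n B -> A <> B ->
     A x1 -> B x2 -> rho <= d x1 x2).

Definition finite_shadowing d (f : X -> X) : Prop :=
  forall e, 0 < e -> exists dl, 0 < dl /\
    forall (k : nat) (x : nat -> X),
      (forall i, (i < k)%nat -> d (f (x i)) (x (S i)) < dl) ->
      exists z, forall i, (i <= k)%nat -> d (Nat.iter i f z) (x i) < e.

Definition PO (f : X -> X) (U : (X -> Prop) -> Prop) (O : nat -> (X -> Prop)) : Prop :=
  forall i, U (O i) /\ exists x, O i x /\ O (S i) (f x).

(* metric on PO(U): 1/(i+1) for the least i with O_i <> O'_i, 0 if equal *)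
Definition dPO (O O' : nat -> (X -> Prop)) : R :=
  match excluded_middle_informative (exists i, O i <> O' i) with
  | left _ => / INR (S (epsilon (inhabits 0%nat)
                 (fun i => O i <> O' i /\ forall j, (j < i)%nat -> O j = O' j)))
  | right _ => 0
  end.

(* V = ↪(O) : V is the unique element of U^N with O_i ⊆ V_i for all i *)
Definition bond (U : (X -> Prop) -> Prop) (O V : nat -> (X -> Prop)) : Prop :=
  forall i, U (V i) /\ subset (O i) (V i).

Definition inv_lim (f : X -> X) (U : nat -> (X -> Prop) -> Prop)
    (y : nat -> nat -> (X -> Prop)) : Prop :=
  forall n, PO f (U n) (y n) /\ bond (U n) (y (S n)) (y n).

(* d_Pi(y,z) = max_n d(y_n,z_n)/(n+1) *)
Definition dPi (y z : nat -> nat -> (X -> Prop)) : R :=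
  epsilon (inhabits 0)
    (fun m => (exists n, m = dPO (y n) (z n) / INR (S n)) /\
              forall n, dPO (y n) (z n) / INR (S n) <= m).

Definition sigma_star (y : nat -> nat -> (X -> Prop)) : nat -> nat -> (X -> Prop) :=
  fun n i => y n (S i).

Definition conjugacy d f U (h : X -> nat -> nat -> (X -> Prop))
    (g : (nat -> nat -> (X -> Prop)) -> X) : Prop :=
  (forall x, inv_lim f U (h x)) /\
  (forall x, g (h x) = x) /\
  (forall y, inv_lim f U y -> h (g y) = y) /\
  (forall x, h (f x) = sigma_star (h x)) /\
  (forall x e, 0 < e -> exists dl, 0 < dl /\
     forall x', d x x' < dl -> dPi (h x) (h x') < e) /\
  (forall y, inv_lim f U y -> forall e, 0 < e -> exists dl, 0 < dl /\
     forall y', inv_lim f U y' -> dPi y y' < dl -> d (g y) (g y') < e).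

Definition uniform_homeo d f U (h : X -> nat -> nat -> (X -> Prop))
    (g : (nat -> nat -> (X -> Prop)) -> X) : Prop :=
  (forall e, 0 < e -> exists dl, 0 < dl /\
     forall x x', d x x' < dl -> dPi (h x) (h x') < e) /\
  (forall e, 0 < e -> exists dl, 0 < dl /\
     forall y y', inv_lim f U y -> inv_lim f U y' -> dPi y y' < dl -> d (g y) (g y') < e).

End Defs.

(* Main.v *)
Require Import Defs.
From Stdlib Require Import Reals.
From Stdlib Require Import Lra Lia Classical ClassicalEpsilon FunctionalExtensionality.
Open Scope R_scope.

Lemma inv_S_pos k : 0 < / INR (S k).
Proof. apply Rinv_0_lt_compat. apply lt_0_INR; lia. Qed.

Lemma inv_S_le k n : (k <= n)%nat -> / INR (S n) <= / INR (S k).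
Proof. intro H. apply Rinv_le_contravar. apply lt_0_INR; lia. apply le_INR; lia. Qed.

Lemma inv_S_lt k n : (k < n)%nat -> / INR (S n) < / INR (S k).
Proof. intro H. apply Rinv_lt_contravar.
  apply Rmult_lt_0_compat; apply lt_0_INR; lia. apply lt_INR; lia. Qed.

Lemma inv_S0 : / INR (S 0) = 1.
Proof. simpl. apply Rinv_1. Qed.

Lemma inv_S_small e : 0 < e -> exists K, / INR (S K) < e.
Proof.
  intro He. destruct (INR_unbounded (/ e)) as [K HK].
  exists K. rewrite <- (Rinv_inv e). apply Rinv_lt_contravar.
  - apply Rmult_lt_0_compat. apply Rinv_0_lt_compat; lra. apply lt_0_INR; lia.
  - rewrite S_INR. lra.
Qed.

Lemma least_ex (P : nat -> Prop) : (exists n, P n) ->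
  exists i, P i /\ forall j, (j < i)%nat -> ~ P j.
Proof.
  intros [n Hn]. apply NNPP. intro Hno.
  assert (H : forall m, forall k, (k <= m)%nat -> ~ P k).
  { induction m; intros k Hk HP; apply Hno; exists k; split; auto; intros j Hj.
    - lia.
    - apply IHm; lia. }
  exact (H n n (le_n n) Hn).
Qed.

Lemma dPO_cases {X} (O O' : nat -> X -> Prop) :
  (exists i, O i <> O' i /\ (forall j, (j < i)%nat -> O j = O' j) /\ dPO O O' = / INR (S i))
  \/ ((forall i, O i = O' i) /\ dPO O O' = 0).
Proof.
  unfold dPO. destruct (excluded_middle_informative _) as [Hex|Hn].
  - left.
    assert (HP : exists i, O i <> O' i /\ forall j, (j < i)%nat -> O j = O' j).
    { destruct (least_ex _ Hex) as [i [Hi Hj]]. exists i. split; auto.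
      intros j Hji. apply NNPP. apply Hj. auto. }
    destruct (epsilon_spec (inhabits 0%nat) _ HP) as [H1 H2].
    eexists; split; [exact H1|split; [exact H2|reflexivity]].
  - right. split; auto. intro i. apply NNPP. intro H. apply Hn. eauto.
Qed.

Lemma dPO_bounds {X} (O O' : nat -> X -> Prop) : 0 <= dPO O O' <= 1.
Proof.
  destruct (dPO_cases O O') as [[i [_ [_ E]]]|[_ E]]; rewrite E; try lra.
  pose proof (inv_S_pos i). pose proof (inv_S_le 0 i ltac:(lia)). rewrite inv_S0 in H0. lra.
Qed.

Lemma dPO_eq_small {X} (O O' : nat -> X -> Prop) k :
  (forall j, (j <= k)%nat -> O j = O' j) -> dPO O O' < / INR (S k).
Proof.
  intro H. pose proof (inv_S_pos k).
  destruct (dPO_cases O O') as [[i [Hi [_ E]]]|[_ E]]; rewrite E; try lra.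
  apply inv_S_lt. destruct (Compare_dec.le_lt_dec i k) as [Hik|Hik]; auto. exfalso; apply Hi, H, Hik.
Qed.

Lemma dPO_small_eq {X} (O O' : nat -> X -> Prop) k :
  dPO O O' < / INR (S k) -> forall j, (j <= k)%nat -> O j = O' j.
Proof.
  intros H j Hj.
  destruct (dPO_cases O O') as [[i [Hi [Hl E]]]|[Ha E]]; auto.
  rewrite E in H. apply Hl. destruct (Compare_dec.le_lt_dec i k) as [Hik|Hik]; try lia.
  pose proof (inv_S_le i k Hik). lra.
Qed.

Definition aPi {X} (y z : nat -> nat -> X -> Prop) n := dPO (y n) (z n) / INR (S n).

Lemma aPi_bounds {X} (y z : nat -> nat -> X -> Prop) n :
  0 <= aPi y z n <= / INR (S n) /\ aPi y z n <= dPO (y n) (z n).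
Proof.
  unfold aPi, Rdiv. destruct (dPO_bounds (y n) (z n)). pose proof (inv_S_pos n).
  pose proof (inv_S_le 0 n ltac:(lia)). rewrite inv_S0 in H2.
  split; [split|].
  - apply Rmult_le_pos; lra.
  - rewrite <- (Rmult_1_l (/ INR (S n))) at 2. apply Rmult_le_compat_r; lra.
  - rewrite <- (Rmult_1_r (dPO (y n) (z n))) at 2. apply Rmult_le_compat_l; lra.
Qed.

Lemma fin_max (a : nat -> R) K : exists n, (n <= K)%nat /\ forall j, (j <= K)%nat -> a j <= a n.
Proof.
  induction K.
  - exists 0%nat. split; auto. intros j Hj. assert (j = 0%nat) by lia. subst; lra.
  - destruct IHK as [n [Hn Hm]]. destruct (Rle_lt_dec (a (S K)) (a n)).
    + exists n. split. lia. intros j Hj. destruct (Nat.eq_dec j (S K)). subst; auto. apply Hm; lia.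
    + exists (S K). split. lia. intros j Hj. destruct (Nat.eq_dec j (S K)). subst; lra.
      pose proof (Hm j ltac:(lia)); lra.
Qed.

Lemma dPi_max_ex {X} (y z : nat -> nat -> X -> Prop) :
  exists m, (exists n, m = aPi y z n) /\ forall n, aPi y z n <= m.
Proof.
  destruct (classic (exists N, 0 < aPi y z N)) as [[N HN]|HN].
  - destruct (inv_S_small _ HN) as [K HK].
    destruct (fin_max (aPi y z) (max N K)) as [n [Hn Hm]].
    exists (aPi y z n). split; eauto. intro j.
    destruct (Compare_dec.le_lt_dec j (max N K)). auto.
    pose proof (Hm N ltac:(lia)). pose proof (aPi_bounds y z j).
    pose proof (inv_S_le K j ltac:(lia)). lra.
  - exists (aPi y z 0). split; eauto. intro n. pose proof (aPi_bounds y z 0).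
    assert (~ 0 < aPi y z n) by eauto. lra.
Qed.

Lemma dPi_spec {X} (y z : nat -> nat -> X -> Prop) :
  (exists n, dPi y z = aPi y z n) /\ forall n, aPi y z n <= dPi y z.
Proof. unfold dPi. exact (epsilon_spec (inhabits 0) _ (dPi_max_ex y z)). Qed.

Lemma dPi_small {X} (y z : nat -> nat -> X -> Prop) K e :
  / INR (S K) < e -> (forall n j, (n <= K)%nat -> (j <= K)%nat -> y n j = z n j) -> dPi y z < e.
Proof.
  intros HK H. destruct (dPi_spec y z) as [[n E] _]. rewrite E.
  pose proof (aPi_bounds y z n).
  destruct (Compare_dec.le_lt_dec n K).
  - pose proof (dPO_eq_small (y n) (z n) K (fun j Hj => H n j l Hj)). lra.
  - pose proof (inv_S_le K n ltac:(lia)). lra.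
Qed.

Lemma dPi_large {X} (y z : nat -> nat -> X -> Prop) N :
  dPi y z < / INR (S N) -> y N 0%nat = z N 0%nat.
Proof.
  intro H. destruct (dPi_spec y z) as [_ Hm]. pose proof (Hm N) as H0. unfold aPi in H0.
  assert (H1 : dPO (y N) (z N) < / INR (S 0)).
  { rewrite inv_S0. pose proof (inv_S_pos N).
    apply Rmult_lt_reg_r with (/ INR (S N)); auto. unfold Rdiv in H0. lra. }
  apply (dPO_small_eq _ _ 0 H1 0); lia.
Qed.

Lemma fin_delta (Q : R -> nat -> Prop) K :
  (forall dl dl' n, 0 < dl' <= dl -> Q dl n -> Q dl' n) ->
  (forall n, (n <= K)%nat -> exists dl, 0 < dl /\ Q dl n) ->
  exists dl, 0 < dl /\ forall n, (n <= K)%nat -> Q dl n.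
Proof.
  intros Hmon. induction K; intro H.
  - destruct (H 0%nat (le_n _)) as [dl [Hd HQ]]. exists dl. split; auto.
    intros n Hn. replace n with 0%nat by lia. auto.
  - destruct IHK as [d1 [Hd1 HQ1]]. intros n Hn; apply H; lia.
    destruct (H (S K) (le_n _)) as [d2 [Hd2 HQ2]].
    exists (Rmin d1 d2). split. apply Rmin_pos; auto. intros n Hn.
    destruct (Nat.eq_dec n (S K)).
    + subst. apply (Hmon d2); auto. split. apply Rmin_pos; auto. apply Rmin_r.
    + apply (Hmon d1). split. apply Rmin_pos; auto. apply Rmin_l. apply HQ1; lia.
Qed.

Section Main.
Variable X : Type.
Variable d : X -> X -> R.
Variable f : X -> X.
Variable U : nat -> (X -> Prop) -> Prop.
Hypothesis Hmet : is_metric d.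
Hypothesis Hpart : forall n, partition d (U n).
Hypothesis Hrefine : forall n A, U (S n) A -> exists B, U n B /\ subset A B.
Hypothesis Hdiam : forall e, 0 < e -> exists N, forall n, (N <= n)%nat ->
     forall O, U n O -> forall x y, O x -> O y -> d x y <= e.
Hypothesis Hrho : forall n, exists rho, 0 < rho /\ forall A B x1 x2, U n A -> U n B -> A <> B ->
     A x1 -> B x2 -> rho <= d x1 x2.

Lemma d_sym x y : d x y = d y x.
Proof. destruct Hmet as [_ [_ [H _]]]. apply H. Qed.
Lemma d_tri x y z : d x z <= d x y + d y z.
Proof. destruct Hmet as [_ [_ [_ H]]]. apply H. Qed.
Lemma d_pos x y : 0 <= d x y.
Proof. destruct Hmet as [H _]. apply H. Qed.
Lemma d_zero x y : (forall e, 0 < e -> d x y <= e) -> x = y.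
Proof.
  intro H. destruct Hmet as [_ [Hz _]]. apply Hz.
  pose proof (d_pos x y). destruct (Rle_lt_dec (d x y) 0). lra.
  pose proof (H (d x y / 2) ltac:(lra)). lra.
Qed.

Definition cell n (p : X) : X -> Prop :=
  epsilon (inhabits (fun _ : X => False)) (fun A => U n A /\ A p).

Lemma cell_spec n p : U n (cell n p) /\ cell n p p.
Proof.
  unfold cell. apply epsilon_spec. destruct (Hpart n) as [_ [_ Hc]]. apply Hc.
Qed.

Lemma cell_uniq n p A : U n A -> A p -> cell n p = A.
Proof.
  intros HA Hp. destruct (cell_spec n p) as [H1 H2].
  destruct (classic (cell n p = A)) as [E|E]; auto.
  destruct (Hpart n) as [_ [Hd _]]. exfalso. exact (Hd _ _ H1 HA E p H2 Hp).
Qed.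

Lemma near_in n : exists rho, 0 < rho /\ forall A a b, U n A -> A a -> d a b < rho -> A b.
Proof.
  destruct (Hrho n) as [rho [Hr H]]. exists rho. split; auto.
  intros A a b HA Ha Hab. destruct (cell_spec n b) as [H1 H2].
  destruct (classic (A = cell n b)) as [E|E].
  - rewrite E; auto.
  - pose proof (H _ _ _ _ HA H1 E Ha H2). lra.
Qed.

Lemma cell_close n : exists rho, 0 < rho /\ forall p q, d p q < rho -> cell n p = cell n q.
Proof.
  destruct (near_in n) as [rho [Hr H]]. exists rho. split; auto.
  intros p q Hpq. destruct (cell_spec n p) as [H1 H2].
  symmetry. apply cell_uniq; auto. eapply H; eauto.
Qed.

Definition hh (x : X) : nat -> nat -> X -> Prop := fun n i => cell n (Nat.iter i f x).

Lemma hh_inv x : inv_lim f U (hh x).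
Proof.
  unfold inv_lim, PO, bond, hh. intro n; split.
  - intro i. split. apply cell_spec. exists (Nat.iter i f x). split. apply cell_spec.
    exact (proj2 (cell_spec n (Nat.iter (S i) f x))).
  - intro i. split. apply cell_spec. set (q := Nat.iter i f x).
    destruct (Hrefine n (cell (S n) q) (proj1 (cell_spec (S n) q))) as [B [HB Hsub]].
    rewrite (cell_uniq n q B HB (Hsub q (proj2 (cell_spec (S n) q)))). exact Hsub.
Qed.

Lemma hh_shift x : hh (f x) = sigma_star (hh x).
Proof.
  unfold sigma_star, hh. extensionality n. extensionality i.
  rewrite Nat.iter_succ_r. reflexivity.
Qed.


Lemma iter_cont : continuous_map d f -> forall j, continuous_map d (Nat.iter j f).
Proof.
  intros Hf j. induction j; intros x e He.
  - exists e. split; auto.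
  - destruct (Hf (Nat.iter j f x) e He) as [d1 [Hd1 H1]].
    destruct (IHj x d1 Hd1) as [d2 [Hd2 H2]].
    exists d2. split; auto. intros y Hy. simpl. apply H1. apply H2; auto.
Qed.

Lemma iter_ucont : unif_continuous_map d f -> forall j, unif_continuous_map d (Nat.iter j f).
Proof.
  intros Hf j. induction j; intros e He.
  - exists e. split; auto.
  - destruct (Hf e He) as [d1 [Hd1 H1]].
    destruct (IHj d1 Hd1) as [d2 [Hd2 H2]].
    exists d2. split; auto. intros x y Hy. simpl. apply H1. apply H2; auto.
Qed.

Lemma bond_iter y : inv_lim f U y -> forall m n, (m <= n)%nat -> forall i p, y n i p -> y m i p.
Proof.
  intros Hy m n Hmn. induction Hmn; auto.
  intros i p Hp. apply IHHmn. exact (proj2 (proj2 (Hy m0) i) p Hp).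
Qed.

Hypothesis Hcomp : complete_seq U.
Hypothesis Hshadow : finite_shadowing d f.
Hypothesis Hfc : continuous_map d f.

Lemma main_ex y : inv_lim f U y -> exists x, forall n i, y n i (Nat.iter i f x).
Proof.
  intro Hy.
  destruct (Hcomp (fun n => y n 0%nat)) as [x Hx].
  { intro n. exact (proj1 (proj1 (Hy n) 0%nat)). }
  { intro n. exact (proj2 (proj2 (Hy n) 0%nat)). }
  exists x. intros m i.
  destruct (near_in m) as [rho [Hr Hnear]].
  destruct (iter_cont Hfc i x (rho/2) ltac:(lra)) as [d1 [Hd1 H1]].
  set (eps := Rmin (rho/2) (d1/2)).
  assert (Heps : 0 < eps) by (apply Rmin_pos; lra).
  destruct (Hshadow eps Heps) as [d2 [Hd2 H2]].
  assert (Hmin : 0 < Rmin d1 d2 / 2) by (pose proof (Rmin_pos d1 d2 Hd1 Hd2); lra).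
  destruct (Hdiam _ Hmin) as [N HN].
  set (n := max N m).
  assert (HNn : (N <= n)%nat) by lia.
  set (a := fun j => epsilon (inhabits x) (fun p => y n j p /\ y n (S j) (f p))).
  assert (Ha : forall j, y n j (a j) /\ y n (S j) (f (a j))).
  { intro j. unfold a. apply epsilon_spec. exact (proj2 (proj1 (Hy n) j)). }
  destruct (H2 i a) as [z Hz].
  { intros j Hj. pose proof (HN n HNn (y n (S j)) (proj1 (proj1 (Hy n) (S j)))
      (f (a j)) (a (S j)) (proj2 (Ha j)) (proj1 (Ha (S j)))).
    pose proof (Rmin_r d1 d2). lra. }
  assert (E1 : d x (a 0%nat) <= d1 / 2).
  { pose proof (HN n HNn (y n 0%nat) (proj1 (proj1 (Hy n) 0%nat)) x (a 0%nat) (Hx n) (proj1 (Ha 0%nat))).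
    pose proof (Rmin_l d1 d2). lra. }
  assert (E2 : d z (a 0%nat) < d1 / 2).
  { pose proof (Hz 0%nat ltac:(lia)). simpl in H. pose proof (Rmin_r (rho/2) (d1/2)). fold eps in H0. lra. }
  assert (E3 : d x z < d1).
  { pose proof (d_tri x (a 0%nat) z). rewrite (d_sym (a 0%nat) z) in H. lra. }
  pose proof (H1 z E3) as E4.
  assert (E5 : d (Nat.iter i f z) (a i) < rho / 2).
  { pose proof (Hz i (le_n _)). pose proof (Rmin_l (rho/2) (d1/2)). fold eps in H0. lra. }
  assert (E6 : d (a i) (Nat.iter i f x) < rho).
  { pose proof (d_tri (a i) (Nat.iter i f z) (Nat.iter i f x)).
    pose proof (d_sym (a i) (Nat.iter i f z)). pose proof (d_sym (Nat.iter i f z) (Nat.iter i f x)).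
    pose proof (d_sym (Nat.iter i f x) (Nat.iter i f z)). lra. }
  apply (Hnear (y m i) (a i)); auto.
  - exact (proj1 (proj1 (Hy m) i)).
  - apply (bond_iter y Hy m n ltac:(lia)). apply Ha.
Qed.

End Main.

Theorem theorem4p15 (X : Type) (d : X -> X -> R) (f : X -> X)
  (U : nat -> (X -> Prop) -> Prop) :
  dyn_system d f ->
  defining_sequence d U -> complete_seq U -> tame_seq d U ->
  finite_shadowing d f ->
  (exists h g, conjugacy d f U h g) /\
  (unif_continuous_map d f ->
     exists h g, conjugacy d f U h g /\ uniform_homeo d f U h g).
Proof.
  intros [inh [Hmet [_ Hfc]]] [Hpart [Hrefine _]] Hcomp [Hdiam Hrho] Hshadow.
  set (h := hh X f U).
  set (g := fun y : nat -> nat -> X -> Prop =>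
              epsilon inh (fun x => forall n i, y n i (Nat.iter i f x))).
  assert (Hg : forall y, inv_lim f U y -> forall n i, y n i (Nat.iter i f (g y))).
  { intros y Hy. unfold g. apply epsilon_spec.
    exact (main_ex X d f U Hmet Hpart Hdiam Hrho Hcomp Hshadow Hfc y Hy). }
  assert (Hgu : forall e, 0 < e -> exists dl, 0 < dl /\
     forall y y', inv_lim f U y -> inv_lim f U y' -> dPi y y' < dl -> d (g y) (g y') < e).
  { intros e He. destruct (Hdiam (e/2) ltac:(lra)) as [N HN].
    exists (/ INR (S N)). split. apply inv_S_pos.
    intros y y' Hy Hy' Hd. pose proof (dPi_large y y' N Hd) as E.
    pose proof (Hg y Hy N 0%nat) as G1. pose proof (Hg y' Hy' N 0%nat) as G2. simpl in G1, G2.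
    rewrite <- E in G2.
    pose proof (HN N (le_n _) (y N 0%nat) (proj1 (proj1 (Hy N) 0%nat)) _ _ G1 G2). lra. }
  pose proof (cell_close X d U Hpart Hrho) as Hcl.
  assert (Hconj : conjugacy d f U h g).
  { split; [|split; [|split; [|split; [|split]]]].
    - intro x. exact (hh_inv X d f U Hpart Hrefine x).
    - intro x. apply (d_zero X d Hmet). intros e He.
      destruct (Hdiam e He) as [N HN].
      pose proof (Hg (h x) (hh_inv X d f U Hpart Hrefine x) N 0%nat) as G.
      unfold h, hh in G. simpl in G.
      destruct (cell_spec X d U Hpart N x) as [C1 C2].
      exact (HN N (le_n _) _ C1 _ _ G C2).
    - intros y Hy. unfold h, hh. extensionality n. extensionality i.
      apply (cell_uniq X d U Hpart). exact (proj1 (proj1 (Hy n) i)). apply Hg; auto.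
    - intro x. apply hh_shift.
    - intros x e He. destruct (inv_S_small e He) as [K HK].
      destruct (fin_delta (fun dl n => forall j, (j <= K)%nat -> forall x', d x x' < dl ->
                  h x n j = h x' n j) K) as [dl [Hdl HQ]].
      { intros dl dl' n [H1 H2] HQ j Hj x' Hx'. apply HQ; auto. lra. }
      { intros n Hn.
        apply (fin_delta (fun dl j => forall x', d x x' < dl -> h x n j = h x' n j) K).
        { intros dl dl' j [H1 H2] HQ x' Hx'. apply HQ. lra. }
        intros j Hj. destruct (Hcl n) as [rho [Hr Hc]].
        destruct (iter_cont X d f Hfc j x rho Hr) as [dl [Hdl H]].
        exists dl. split; auto. intros x' Hx'. unfold h, hh. apply Hc. auto. }
      exists dl. split; auto. intros x' Hx'. apply (dPi_small _ _ K e HK).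
      intros n j Hn Hj. apply HQ; auto.
    - intros y Hy e He. destruct (Hgu e He) as [dl [Hdl H]]. exists dl. split; auto.
      }
  split.
  - exists h, g. exact Hconj.
  - intro Hu. exists h, g. split; auto. split; [|exact Hgu].
    intros e He. destruct (inv_S_small e He) as [K HK].
    destruct (fin_delta (fun dl n => forall j, (j <= K)%nat -> forall x x', d x x' < dl ->
                h x n j = h x' n j) K) as [dl [Hdl HQ]].
    { intros dl dl' n [H1 H2] HQ j Hj x x' Hx'. apply HQ; auto. lra. }
    { intros n Hn.
      apply (fin_delta (fun dl j => forall x x', d x x' < dl -> h x n j = h x' n j) K).
      { intros dl dl' j [H1 H2] HQ x x' Hx'. apply HQ. lra. }
      intros j Hj. destruct (Hcl n) as [rho [Hr Hc]].
      destruct (iter_ucont X d f Hu j rho Hr) as [dl [Hdl H]].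
      exists dl. split; auto. intros x x' Hx'. unfold h, hh. apply Hc. auto. }
    exists dl. split; auto. intros x x' Hx'. apply (dPi_small _ _ K e HK).
    intros n j Hn Hj. apply HQ; auto.
Qed.
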